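(* Let $\theta\in(0,1)$ be irrational and $k\in\Lambda$. Then any two distinct component intervals $I_k(i),I_k(i')$ ($1\le i\ne i'\le q_k$) of $D_k$ are separated by a gap of length at least $\tfrac17\|q_{k-1}\theta\|$.
   Context: $\mathbb T=\mathbb R/\mathbb Z$, points identified with fractional parts; $(x-a,x+b)$ denotes the projection to $\mathbb T$ of the real interval. $\|t\|$ is the distance to the nearest integer. $\theta=[0;a_1,a_2,\dots]$ with convergent denominators $q_0=1$, $q_{k+1}=a_{k+1}q_k+q_{k-1}$. For $k\ge0$: $r_{k+1}=\lfloor\sqrt{4a_{k+1}+5}\rfloor-3$ if $a_{k+1}\ne2$ and $r_{k+1}=1$ if $a_{k+1}=2$; $\tilde r_{k+1}=2$ if $a_{k+1}=4$ and $a_{k+2}\ge2$, and $\tilde r_{k+1}=r_{k+1}$ otherwise. $\Lambda=\{k\in\mathbb N: a_{k+1}\ge3\text{ or }a_{k+2}=2\}$. For $k\in\Lambda$ put $R_k=\tilde r_{k+1}\|q_k\theta\|+\|q_{k+1}\theta\|$, and $L_k=\|q_k\theta\|$ if $a_{k+2}\ne2$, $L_k=\|q_{k+1}\theta\|+\|q_{k+2}\theta\|$ if $a_{k+2}=2$; set $I_k(i)=(i\theta-L_k,\,i\theta+R_k)$ if $k$ is even and $I_k(i)=(i\theta-R_k,\,i\theta+L_k)$ if $k$ is odd, and $D_k=\bigcup_{i=1}^{q_k}I_k(i)$. *)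

(* Defs.v *)
From Stdlib Require Import Reals Lra Lia ZArith Arith.
Open Scope R_scope.

Definition dnint (t : R) : R := Rmin (frac_part t) (1 - frac_part t).

Fixpoint cf_rem (theta : R) (m : nat) : R :=
  match m with
  | O => theta
  | S m' => frac_part (/ cf_rem theta m')
  end.

(* partial quotients a_n (n >= 1): a_n = floor(1/x_{n-1}); theta = [0;a_1,a_2,...] *)
Definition cf_a (theta : R) (n : nat) : nat :=
  Z.to_nat (Int_part (/ cf_rem theta (n - 1))).

(* qpair n = (q_{n-1}, q_n), with q_{-1} = 0, q_0 = 1,
   q_{n+1} = a_{n+1} q_n + q_{n-1} *)
Fixpoint qpair (theta : R) (n : nat) : nat * nat :=
  match n with
  | O => (0%nat, 1%nat)
  | S n' => let (p, c) := qpair theta n' in (c, (cf_a theta (S n') * c + p)%nat)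
  end.

Definition cf_q (theta : R) (n : nat) : nat := snd (qpair theta n).
Definition cf_qprev (theta : R) (n : nat) : nat := fst (qpair theta n).

(* r_{k+1} = floor(sqrt(4 a_{k+1} + 5)) - 3 if a_{k+1} <> 2, and 1 if a_{k+1} = 2.
   floor of sqrt of a natural number is Nat.sqrt; the value is >= 0 since a >= 1. *)
Definition r_succ (theta : R) (k : nat) : nat :=
  if Nat.eqb (cf_a theta (S k)) 2 then 1%nat
  else (Nat.sqrt (4 * cf_a theta (S k) + 5) - 3)%nat.

Definition rt_succ (theta : R) (k : nat) : nat :=
  if andb (Nat.eqb (cf_a theta (S k)) 4) (Nat.leb 2 (cf_a theta (S (S k)))) then 2%nat
  else r_succ theta k.

Definition in_Lambda (theta : R) (k : nat) : Prop :=
  (3 <= cf_a theta (S k))%nat \/ cf_a theta (S (S k)) = 2%nat.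

Definition Rk (theta : R) (k : nat) : R :=
  INR (rt_succ theta k) * dnint (INR (cf_q theta k) * theta)
  + dnint (INR (cf_q theta (S k)) * theta).

Definition Lk (theta : R) (k : nat) : R :=
  if Nat.eqb (cf_a theta (S (S k))) 2
  then dnint (INR (cf_q theta (S k)) * theta) + dnint (INR (cf_q theta (S (S k))) * theta)
  else dnint (INR (cf_q theta k) * theta).

(* A point of T lies in I_k(i) iff some (equivalently any suitable) real lift does; since
   dnint is 1-periodic, quantifying over all real lifts below is equivalent. *)
Definition in_I (theta : R) (k i : nat) (t : R) : Prop :=
  if Nat.even k
  then INR i * theta - Lk theta k < t < INR i * theta + Rk theta k
  else INR i * theta - Rk theta k < t < INR i * theta + Lk theta k.

Definition irrational (x : R) : Prop :=
  forall (p q : Z), q <> 0%Z -> x <> IZR p / IZR q.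

(* Main.v *)
Require Import Defs.
From Stdlib Require Import Reals.
From Stdlib Require Import Lra Lia ZArith Arith Psatz.
Open Scope R_scope.

Lemma dnint_le : forall y m, dnint y <= Rabs (y - IZR m).
Proof.
  intros y m. unfold dnint, frac_part.
  destruct (base_Int_part y) as [H1 H2].
  set (z := Int_part y) in *.
  destruct (Z_le_gt_dec m z) as [Hm|Hm].
  - apply IZR_le in Hm. apply Rle_trans with (y - IZR z). apply Rmin_l.
    rewrite Rabs_right; lra.
  - assert (IZR (z+1) <= IZR m) by (apply IZR_le; lia).
    rewrite plus_IZR in H. apply Rle_trans with (1 - (y - IZR z)). apply Rmin_r.
    rewrite Rabs_left1; lra.
Qed.

Lemma dnint_ge : forall y c, (forall m, c <= Rabs (y - IZR m)) -> c <= dnint y.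
Proof.
  intros y c H. unfold dnint, frac_part.
  destruct (base_Int_part y) as [H1 H2].
  pose proof (H (Int_part y)) as A. pose proof (H (Int_part y + 1)%Z) as B.
  rewrite plus_IZR in B.
  rewrite Rabs_right in A by lra. rewrite Rabs_left1 in B by lra.
  apply Rmin_glb; lra.
Qed.

Lemma irr_step : forall x, 0 < x < 1 -> irrational x ->
  0 < frac_part (/ x) < 1 /\ irrational (frac_part (/ x)).
Proof.
  intros x Hx Hi. unfold frac_part.
  destruct (base_Int_part (/ x)) as [H1 H2].
  set (z := Int_part (/x)) in *.
  assert (Hirr : irrational (/ x - IZR z)).
  { intros p q Hq E.
    assert (Hx' : / x = IZR (z * q + p) / IZR q).
    { rewrite plus_IZR, mult_IZR. apply not_0_IZR in Hq.
      replace (/x) with (/x - IZR z + IZR z) by ring. rewrite E. field. auto. }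
    assert (Hn : (z * q + p)%Z <> 0%Z).
    { intro E0. rewrite E0 in Hx'. unfold Rdiv in Hx'. rewrite Rmult_0_l in Hx'.
      assert (0 < / x) by (apply Rinv_0_lt_compat; lra). lra. }
    apply (Hi q (z*q+p)%Z Hn).
    apply not_0_IZR in Hn. apply not_0_IZR in Hq.
    rewrite <- (Rinv_inv x). rewrite Hx'. field. auto. }
  split; [|exact Hirr].
  split; [|lra].
  destruct (Rle_lt_or_eq_dec 0 (/ x - IZR z)) as [h|h]; [lra|lra|].
  exfalso. apply (Hirr 0%Z 1%Z). lia. rewrite <- h. simpl. field.
Qed.

Section S.
Variable th : R.
Hypothesis Hth : 0 < th < 1.
Hypothesis Hirr : irrational th.

Lemma rem_props : forall n, 0 < cf_rem th n < 1 /\ irrational (cf_rem th n).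
Proof.
  induction n as [|n IH]; simpl. auto.
  destruct IH as [h1 h2]. apply irr_step; auto.
Qed.

Lemma cf_a_eq : forall n, INR (cf_a th (S n)) = IZR (Int_part (/ cf_rem th n))
  /\ (1 <= cf_a th (S n))%nat.
Proof.
  intro n. unfold cf_a. replace (S n - 1)%nat with n by lia.
  destruct (rem_props n) as [[h1 h2] _].
  destruct (base_Int_part (/ cf_rem th n)) as [H1 H2].
  assert (1 < / cf_rem th n).
  { rewrite <- Rinv_1. apply Rinv_lt_contravar; lra. }
  assert (0 < IZR (Int_part (/ cf_rem th n))) by lra.
  apply lt_IZR in H0.
  rewrite INR_IZR_INZ, Z2Nat.id by lia. split; auto. lia.
Qed.

Lemma rem_S : forall n, cf_rem th (S n) = / cf_rem th n - INR (cf_a th (S n)).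
Proof.
  intro n. rewrite (proj1 (cf_a_eq n)). reflexivity.
Qed.

Fixpoint bm (n : nat) : R := match n with O => 1 | S m => bm m * cf_rem th m end.

Lemma bm_pos : forall n, 0 < bm n.
Proof. induction n; simpl. lra. destruct (rem_props n) as [[h1 h2] _]. nra. Qed.

Lemma bm_dec : forall n, bm (S n) < bm n.
Proof. intro n. simpl. pose proof (bm_pos n). destruct (rem_props n) as [[h1 h2] _]. nra. Qed.

Lemma bm_rec : forall n, bm (S (S n)) = bm n - INR (cf_a th (S n)) * bm (S n).
Proof.
  intro n. change (bm (S (S n))) with (bm (S n) * cf_rem th (S n)).
  rewrite rem_S. change (bm (S n)) with (bm n * cf_rem th n).
  destruct (rem_props n) as [[h1 h2] _]. field. lra.
Qed.

Fixpoint ppair (n : nat) : nat * nat :=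
  match n with
  | O => (1%nat, 0%nat)
  | S n' => let (p, c) := ppair n' in (c, (cf_a th (S n') * c + p)%nat)
  end.

Lemma rel : forall n,
  INR (fst (qpair th n)) * th - INR (fst (ppair n)) = - (-1)^n * bm n /\
  INR (snd (qpair th n)) * th - INR (snd (ppair n)) = (-1)^n * bm (S n).
Proof.
  induction n as [|n IH].
  - simpl. split; lra.
  - cbn [qpair ppair]. destruct (qpair th n) as [qp q]. destruct (ppair n) as [pp p].
    cbn [fst snd pow] in *. destruct IH as [I1 I2]. split.
    + rewrite I2. ring.
    + rewrite bm_rec. rewrite !plus_INR, !mult_INR.
      replace (( INR (cf_a th (S n)) * INR q + INR qp) * th -
        (INR (cf_a th (S n)) * INR p + INR pp)) with
        (INR (cf_a th (S n)) * (INR q * th - INR p) + (INR qp * th - INR pp)) by ring.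
      rewrite I1, I2. ring.
Qed.

Definition Dz n := (Z.of_nat (snd (ppair n)) * Z.of_nat (fst (qpair th n))
   - Z.of_nat (fst (ppair n)) * Z.of_nat (snd (qpair th n)))%Z.

Lemma Dz_pm : forall n, Dz n = 1%Z \/ Dz n = (-1)%Z.
Proof.
  induction n as [|n IH]. unfold Dz; simpl; auto.
  assert (Dz (S n) = - Dz n)%Z.
  { unfold Dz. simpl. destruct (qpair th n) as [qp q]. destruct (ppair n) as [pp p].
    simpl. rewrite !Nat2Z.inj_add, !Nat2Z.inj_mul. ring. }
  lia.
Qed.

Lemma sign_lemma : forall j u v a b : Z, (0 <= a)%Z -> j = (u*a + v*b)%Z ->
  (0 < Z.abs j < b)%Z -> (1 <= u /\ v <= 0 \/ u <= -1 /\ 0 <= v)%Z.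
Proof.
  intros j u v a b Ha E Hj.
  destruct (Z.eq_dec u 0) as [Hu|Hu].
  { exfalso. subst u. rewrite Z.mul_0_l, Z.add_0_l in E. subst j.
    assert (0 < b)%Z by lia.
    destruct (Z_lt_le_dec 0 v). assert (v*b >= b)%Z by nia. lia.
    destruct (Z.eq_dec v 0). subst. simpl in Hj. lia.
    assert (v*b <= -b)%Z by nia. lia. }
  destruct (Z_lt_le_dec 0 u); destruct (Z_lt_le_dec 0 v).
  - exfalso. assert (u*a >= 0)%Z by nia. assert (v*b >= b)%Z by nia. lia.
  - left; lia.
  - right; lia.
  - destruct (Z.eq_dec v 0). right; lia.
    exfalso. assert (u*a <= 0)%Z by nia. assert (v*b <= -b)%Z by nia. lia.
Qed.

Lemma best_approx : forall n (j m : Z),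
  (0 < Z.abs j < Z.of_nat (snd (qpair th n)))%Z ->
  bm n <= Rabs (IZR j * th - IZR m).
Proof.
  intros n j m Hj.
  set (Q1 := Z.of_nat (fst (qpair th n))). set (Q2 := Z.of_nat (snd (qpair th n))).
  set (P1 := Z.of_nat (fst (ppair n))). set (P2 := Z.of_nat (snd (ppair n))).
  set (e := Dz n).
  assert (He : e = (P2 * Q1 - P1 * Q2)%Z) by reflexivity.
  assert (He2 : (e * e = 1)%Z) by (destruct (Dz_pm n); unfold e; rewrite H; reflexivity).
  set (u := (e * (j * P2 - m * Q2))%Z). set (v := (e * (m * Q1 - j * P1))%Z).
  assert (Ej : j = (u * Q1 + v * Q2)%Z).
  { unfold u, v. transitivity (e * e * j)%Z. rewrite He2; ring.
    rewrite He at 2. ring. }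
  assert (Em : m = (u * P1 + v * P2)%Z).
  { unfold u, v. transitivity (e * e * m)%Z. rewrite He2; ring.
    rewrite He at 2. ring. }
  assert (Hs := sign_lemma j u v Q1 Q2 ltac:(unfold Q1; lia) Ej Hj).
  destruct (rel n) as [R1 R2].
  assert (E : IZR j * th - IZR m = IZR u * (- (-1)^n * bm n) + IZR v * ((-1)^n * bm (S n))).
  { rewrite <- R1, <- R2, Ej, Em. rewrite !plus_IZR, !mult_IZR.
    unfold Q1, Q2, P1, P2. rewrite <- !INR_IZR_INZ. ring. }
  rewrite E. pose proof (bm_pos n). pose proof (bm_pos (S n)).
  assert (Hsg : (-1)^n = 1 \/ (-1)^n = -1).
  { clear -n. destruct (Nat.Even_or_Odd n) as [[k ->]|[k ->]].
    left; apply pow_1_even. right; rewrite Nat.add_1_r; apply pow_1_odd. }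
  destruct Hs as [[h1 h2]|[h1 h2]]; apply IZR_le in h1; apply IZR_le in h2;
  destruct Hsg as [Hg|Hg]; rewrite Hg.
  all: match goal with |- _ <= Rabs ?x =>
         first [ rewrite Rabs_right by nra | rewrite Rabs_left1 by nra ] end; nra.
Qed.

End S.

Lemma rt_bound : forall th k, (1 <= cf_a th (S k))%nat ->
  (7 * rt_succ th k + 7 <= 6 * cf_a th (S k) + 2)%nat /\
  ((3 <= cf_a th (S k)) -> 7 * rt_succ th k + 8 <= 6 * cf_a th (S k))%nat.
Proof.
  intros th k H. unfold rt_succ, r_succ.
  generalize (cf_a th (S (S k))) as a'. revert H. generalize (cf_a th (S k)) as a.
  intros a H a'.
  pose proof (Nat.sqrt_spec (4*a+5)%nat ltac:(lia)) as [S1 S2].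
  remember (Nat.sqrt (4*a+5)%nat) as s eqn:Hs.
  destruct (Nat.eqb_spec a 4); destruct (Nat.leb 2 a'); cbn [andb];
  destruct (Nat.eqb_spec a 2); try lia.
  all: assert (3 <= s)%nat by nia.
  all: split; intros; try nia.
  all: destruct (Nat.le_gt_cases s 5) as [h|h];
    [assert (s = 3 \/ s = 4 \/ s = 5)%nat as HH by lia; destruct HH as [HH|[HH|HH]]; subst s; nia | nia].
Qed.

Lemma dn_q : forall th, 0 < th < 1 -> irrational th -> forall n,
  dnint (INR (cf_q th n) * th) <= bm th (S n) /\
  dnint (INR (cf_qprev th n) * th) <= bm th n.
Proof.
  intros th H1 H2 n. destruct (rel th H1 H2 n) as [R1 R2].
  assert (Hsg : (-1)^n = 1 \/ (-1)^n = -1).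
  { clear. destruct (Nat.Even_or_Odd n) as [[k ->]|[k ->]].
    left; apply pow_1_even. right; rewrite Nat.add_1_r; apply pow_1_odd. }
  pose proof (bm_pos th H1 H2 n). pose proof (bm_pos th H1 H2 (S n)).
  unfold cf_q, cf_qprev. split.
  - eapply Rle_trans. apply (dnint_le _ (Z.of_nat (snd (ppair th n)))).
    rewrite <- INR_IZR_INZ, R2. destruct Hsg as [-> | ->];
    [rewrite Rabs_right by lra | rewrite Rabs_left1 by lra]; lra.
  - eapply Rle_trans. apply (dnint_le _ (Z.of_nat (fst (ppair th n)))).
    rewrite <- INR_IZR_INZ, R1. destruct Hsg as [-> | ->];
    [rewrite Rabs_left1 by lra | rewrite Rabs_right by lra]; lra.
Qed.

Theorem lemma4p5 :
  forall (theta : R), 0 < theta < 1 -> irrational theta ->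
  forall (k : nat), in_Lambda theta k ->
  forall (i i' : nat),
    (1 <= i <= cf_q theta k)%nat -> (1 <= i' <= cf_q theta k)%nat -> i <> i' ->
    forall (t s : R), in_I theta k i t -> in_I theta k i' s ->
      dnint (INR (cf_qprev theta k) * theta) / 7 <= dnint (t - s).
Proof.
  intros th H1 H2 k HL i i' Hi Hi' Hne t s It Is.
  pose proof (dn_q th H1 H2 k) as [D1 D0].
  pose proof (dn_q th H1 H2 (S k)) as [D2 _].
  pose proof (dn_q th H1 H2 (S (S k))) as [D3 _].
  pose proof (bm_rec th H1 H2 k) as E1.
  pose proof (bm_rec th H1 H2 (S k)) as E2.
  pose proof (bm_dec th H1 H2 (S (S k))) as L3.
  pose proof (bm_dec th H1 H2 (S k)) as L2.
  pose proof (bm_pos th H1 H2 (S (S (S k)))) as P3.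
  pose proof (proj2 (cf_a_eq th H1 H2 k)) as A1.
  pose proof (proj2 (cf_a_eq th H1 H2 (S k))) as A2.
  pose proof (rt_bound th k A1) as [RB1 RB2].
  assert (Hd : forall x, 0 <= dnint x).
  { intro x. unfold dnint. destruct (base_Int_part x). unfold frac_part.
    apply Rmin_glb; lra. }
  set (B0 := bm th k) in *. set (B1 := bm th (S k)) in *.
  set (B2 := bm th (S (S k))) in *. set (B3 := bm th (S (S (S k)))) in *.
  set (a1 := cf_a th (S k)) in *. set (a2 := cf_a th (S (S k))) in *.
  set (rt := rt_succ th k) in *.
  assert (HLR : Lk th k + Rk th k <= 6/7 * B0).
  { unfold Lk, Rk. fold a2 rt.
    pose proof (pos_INR rt).
    assert (Rk' : INR rt * dnint (INR (cf_q th k) * th) <= INR rt * B1)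
      by (apply Rmult_le_compat_l; lra).
    destruct (Nat.eqb_spec a2 2) as [e|e].
    - rewrite e in E2. simpl (INR 2) in E2.
      apply le_INR in RB1. rewrite !plus_INR, !mult_INR in RB1. simpl in RB1.
      assert (7 * (INR rt + 1) * B1 <= 6 * INR a1 * B1 + 6 * B2) by nra.
      lra.
    - destruct HL as [HL|HL]; [|contradiction].
      apply RB2 in HL. apply le_INR in HL. rewrite !plus_INR, !mult_INR in HL. simpl in HL.
      assert (7 * (INR rt + 1) * B1 + B2 <= 6 * INR a1 * B1) by nra.
      lra. }
  apply dnint_ge. intro m.
  set (j := (Z.of_nat i - Z.of_nat i')%Z).
  assert (Hj : (0 < Z.abs j < Z.of_nat (snd (qpair th k)))%Z).
  { unfold cf_q in Hi, Hi'. unfold j. lia. }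
  pose proof (best_approx th H1 H2 k j m Hj) as BA. fold B0 in BA.
  assert (Ej : IZR j * th = INR i * th - INR i' * th).
  { unfold j. rewrite minus_IZR, <- !INR_IZR_INZ. ring. }
  assert (W : Rabs ((t - INR i * th) - (s - INR i' * th)) < Lk th k + Rk th k).
  { unfold in_I in It, Is. destruct (Nat.even k); apply Rabs_def1; lra. }
  assert (Rabs (IZR j * th - IZR m) <= Rabs (t - s - IZR m) + Rabs ((t - INR i * th) - (s - INR i' * th))).
  { replace (IZR j * th - IZR m) with ((t - s - IZR m) - ((t - INR i * th) - (s - INR i' * th))) by lra.
    apply Rabs_triang_inv2 || (unfold Rminus at 1; eapply Rle_trans; [apply Rabs_triang|rewrite Rabs_Ropp; lra]). }
  pose proof (bm_pos th H1 H2 k). fold B0 in H0.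
  lra.
Qed.
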